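(* For any link amplitudes and any $\mu\in[0,1]$, at an optimal solution of problem (WSR) both users use full power, i.e. $\alpha_1^\star+\beta_1^\star=P$ and $\alpha_2^\star+\beta_2^\star=P$. Moreover, if either user performs block Markov coding ($\alpha_1^\star>0$ or $\alpha_2^\star>0$), the relay uses full power: $k_1^\star\alpha_1^\star+k_2^\star\alpha_2^\star+\beta_3^\star=P$.
   Context: Full-duplex Gaussian two-way relay channel with link amplitudes $g_{ij}\ge0$ (link from node $j$ to node $i$, nodes $1,2,r$) and power $P>0$. With $C(x)=\log(1+x)$ define $J_1=C(g_{r1}^2\beta_1)$, $J_3=C(g_{r2}^2\beta_2)$, $J_5=C(g_{r1}^2\beta_1+g_{r2}^2\beta_2)$, $J_2=C(g_{21}^2P+2g_{21}g_{2r}\sqrt{k_1}\alpha_1+g_{2r}^2k_1\alpha_1+g_{2r}^2\beta_3)$, $J_4=C(g_{12}^2P+2g_{12}g_{1r}\sqrt{k_2}\alpha_2+g_{1r}^2k_2\alpha_2+g_{1r}^2\beta_3)$. Problem (WSR): maximize $\mu R_1+(1-\mu)R_2$ over $R_1,R_2,\alpha_1,\alpha_2,\beta_1,\beta_2,\beta_3,k_1,k_2\ge0$ subject to $R_1\le\min\{J_1,J_2\}$, $R_2\le\min\{J_3,J_4\}$, $R_1+R_2\le J_5$, $\alpha_1+\beta_1\le P$, $\alpha_2+\beta_2\le P$, $k_1\alpha_1+k_2\alpha_2+\beta_3\le P$. Here $\alpha_i$ is user $i$'s power on the block Markov (repeated old message) component, $\beta_i$ its power on the new message, $k_i\alpha_i$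 the relay's power on the coherent repetition of user $i$'s old message, and $\beta_3$ the relay's power on the independently coded bin index. *)

(* Defs.v *)
From Stdlib Require Import Reals Lra.
Open Scope R_scope.

(* C(x) = log(1+x); natural log (the base does not affect optimality). *)
Definition Cap (x : R) : R := ln (1 + x).

(* Link gains: g21 (1 -> 2), g2r (r -> 2), g12 (2 -> 1), g1r (r -> 1),
   gr1 (1 -> r), gr2 (2 -> r). *)
Record gains := mkGains { g21 : R; g2r : R; g12 : R; g1r : R; gr1 : R; gr2 : R }.

Record wsr_var := mkVar {
  R1 : R; R2 : R; al1 : R; al2 : R; be1 : R; be2 : R; be3 : R; k1 : R; k2 : R }.

Definition J1 (g : gains) (x : wsr_var) := Cap (gr1 g ^ 2 * be1 x).
Definition J3 (g : gains) (x : wsr_var) := Cap (gr2 g ^ 2 * be2 x).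
Definition J5 (g : gains) (x : wsr_var) :=
  Cap (gr1 g ^ 2 * be1 x + gr2 g ^ 2 * be2 x).
Definition J2 (g : gains) (P : R) (x : wsr_var) :=
  Cap (g21 g ^ 2 * P + 2 * g21 g * g2r g * sqrt (k1 x) * al1 x
       + g2r g ^ 2 * k1 x * al1 x + g2r g ^ 2 * be3 x).
Definition J4 (g : gains) (P : R) (x : wsr_var) :=
  Cap (g12 g ^ 2 * P + 2 * g12 g * g1r g * sqrt (k2 x) * al2 x
       + g1r g ^ 2 * k2 x * al2 x + g1r g ^ 2 * be3 x).

Definition wsr_feasible (g : gains) (P : R) (x : wsr_var) : Prop :=
  0 <= R1 x /\ 0 <= R2 x /\ 0 <= al1 x /\ 0 <= al2 x /\
  0 <= be1 x /\ 0 <= be2 x /\ 0 <= be3 x /\ 0 <= k1 x /\ 0 <= k2 x /\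
  R1 x <= Rmin (J1 g x) (J2 g P x) /\
  R2 x <= Rmin (J3 g x) (J4 g P x) /\
  R1 x + R2 x <= J5 g x /\
  al1 x + be1 x <= P /\
  al2 x + be2 x <= P /\
  k1 x * al1 x + k2 x * al2 x + be3 x <= P.

Definition wsr_obj (mu : R) (x : wsr_var) : R := mu * R1 x + (1 - mu) * R2 x.

Definition wsr_optimal (g : gains) (P mu : R) (x : wsr_var) : Prop :=
  wsr_feasible g P x /\
  forall y, wsr_feasible g P y -> wsr_obj mu y <= wsr_obj mu x.

(* Main.v *)
Require Import Defs.
From Stdlib Require Import Reals Lra.
From mathcomp Require Import all_boot all_order all_algebra.
From mathcomp Require Import all_classical all_reals all_analysis.
From mathcomp Require Import Rstruct Rstruct_topology.
Import numFieldNormedType.Exports.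
Open Scope R_scope.

Definition T4 := (R * R * R * R)%type.
Definition cont (f : T4 -> R) := forall p : T4, {for p, continuous f}.
Definition cont1 (g : R -> R) := forall x : R, {for x, continuous g}.

Lemma cont_c c : cont (fun _ => c).
Proof. move=> p; exact: cst_continuous. Qed.
Lemma cont_p1 : cont (fun p => p.1.1.1).
Proof. move=> p. apply: (@continuous_comp _ _ _ (fun p : T4 => p.1.1) fst); last exact: cvg_fst.
apply: (@continuous_comp _ _ _ (fun p : T4 => p.1) fst); exact: cvg_fst. Qed.
Lemma cont_p2 : cont (fun p => p.1.1.2).
Proof. move=> p. apply: (@continuous_comp _ _ _ (fun p : T4 => p.1.1) snd); last exact: cvg_snd.
apply: (@continuous_comp _ _ _ (fun p : T4 => p.1) fst); exact: cvg_fst. Qed.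
Lemma cont_p3 : cont (fun p => p.1.2).
Proof. move=> p. apply: (@continuous_comp _ _ _ (fun p : T4 => p.1) snd); exact: cvg_snd||exact: cvg_fst. Qed.
Lemma cont_p4 : cont (fun p => p.2).
Proof. move=> p; exact: cvg_snd. Qed.
Lemma cont_plus f g : cont f -> cont g -> cont (fun p => Rplus (f p) (g p)).
Proof. move=> hf hg p. exact: (@continuousD R R^o T4 f g p). Qed.
Lemma cont_mult f g : cont f -> cont g -> cont (fun p => Rmult (f p) (g p)).
Proof. move=> hf hg p. exact: (@continuousM R T4 f g p (hf p) (hg p)). Qed.
Lemma cont_opp f : cont f -> cont (fun p => Ropp (f p)).
Proof. move=> hf p. exact: (@continuousN R R^o T4 f p). Qed.
Lemma cont_min f g : cont f -> cont g -> cont (fun p => Rmin (f p) (g p)).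
Proof. move=> hf hg p. have -> : (fun p => Rmin (f p) (g p)) = (f \min g) by apply: funext => y; rewrite RminE.
exact: continuous_min. Qed.
Lemma cont_max f g : cont f -> cont g -> cont (fun p => Rmax (f p) (g p)).
Proof. move=> hf hg p. have -> : (fun p => Rmax (f p) (g p)) = (f \max g) by apply: funext => y; rewrite RmaxE.
exact: continuous_max. Qed.
Lemma cont_comp (g : R -> R) f : cont1 g -> cont f -> cont (fun p => g (f p)).
Proof. move=> hg hf p. apply: (@continuous_comp _ _ _ f g); [exact: hf | exact: hg]. Qed.
Lemma cont1_sqrt : cont1 sqrt.
Proof. have -> : sqrt = Num.sqrt by apply: funext=> y; rewrite RsqrtE. move=> x; exact: sqrt_continuous. Qed.
Lemma cont1_capmax : cont1 (fun x => Rpower.ln (1 + Rmax 0 x)).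
Proof. move=> x.
apply: (@continuous_comp _ _ _ (fun x => 1 + Rmax 0 x) Rpower.ln).
- have -> : (fun x => 1 + Rmax 0 x) = (fun x => 1 + (cst 0 \max id) x) by apply: funext=> y; rewrite RmaxE.
  apply: (@continuousD R R^o R (fun _ => 1) (fun x => (cst 0 \max id) x) x); first exact: cst_continuous.
  apply: continuous_max; [exact: cst_continuous| exact: cvg_id].
- have -> : Rpower.ln = @exp.ln R by apply: funext=> y; rewrite RlnE.
  apply: continuous_ln. have h : 0 < 1 + Rmax 0 x by have := Rmax_l 0 x; lra. by apply/RltP.
Qed.

Definition inbox (c : T4) := 0 <= c.1.1.1 <= 1 /\ 0 <= c.1.1.2 <= 1 /\ 0 <= c.1.2 <= 1 /\ 0 <= c.2 <= 1.
Lemma evt (f : T4 -> R) : cont f ->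
  exists c : T4, inbox c /\ forall p : T4, inbox p -> f p <= f c.
Proof.
move=> hf.
set I : set R := `[0%R, 1%R]%classic.
have cI : compact I by exact: segment_compact.
have memI : forall y, (I y <-> 0 <= y <= 1).
  move=> y; rewrite /I /= in_itv /=; split.
  - by move=> /andP[/RleP ? /RleP ?].
  - by move=> [? ?]; apply/andP; split; apply/RleP.
have h0 : ((I `*` I `*` I `*` I) !=set0)%classic.
  exists (0,0,0,0) => /=. rewrite !memI. lra.
have hc : compact (I `*` I `*` I `*` I)%classic.
  by apply: compact_setX => //; apply: compact_setX => //; apply: compact_setX.
have hcont : ({within (I `*` I `*` I `*` I), continuous f})%classic.
  by apply: continuous_subspaceT => p; exact: hf.
have [c hc1 hc2] := @compact_EVT_max T4 R f _ h0 hc hcont.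
exists c; split.
- move: hc1; rewrite inE /= !memI /inbox. tauto.
- move=> p hp. apply/RleP; apply: hc2; rewrite inE /= !memI. move: hp; rewrite /inbox; tauto.
Qed.


Definition capm (x : R) : R := Rpower.ln (1 + Rmax 0 x).

Lemma Cap_mono x y : 0 <= x -> x <= y -> Cap x <= Cap y.
Proof.
intros h1 h2. unfold Cap. destruct (Rle_lt_or_eq_dec _ _ h2) as [h|h].
- left. apply ln_increasing; lra.
- rewrite h. lra.
Qed.

Lemma Cap_nonneg x : 0 <= x -> 0 <= Cap x.
Proof. intros h. rewrite <- ln_1. fold (Cap 0). replace 1 with (1 + 0) by ring. apply Cap_mono; lra. Qed.

Lemma capm_eq x : 0 <= x -> capm x = Cap x.
Proof. intros h. unfold capm, Cap. rewrite Rmax_right; lra. Qed.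

Lemma Rmin_mono a b a' b' : a <= a' -> b <= b' -> Rmin a b <= Rmin a' b'.
Proof. intros. unfold Rmin. destruct (Rle_dec a b); destruct (Rle_dec a' b'); lra. Qed.

Lemma Rmin_nonneg a b : 0 <= a -> 0 <= b -> 0 <= Rmin a b.
Proof. intros. unfold Rmin. destruct (Rle_dec a b); lra. Qed.

Definition ch1 (mu A B S : R) := if Rle_dec (1/2) mu then A else Rmin A (S - B).
Definition ch2 (mu A B S : R) := if Rle_dec (1/2) mu then Rmin B (S - A) else B.
Definition W (mu A B S : R) := mu * ch1 mu A B S + (1 - mu) * ch2 mu A B S.

Lemma W_opt mu A B S r1 r2 : 0 <= mu <= 1 -> r1 <= A -> r2 <= B -> r1 + r2 <= S ->
  mu * r1 + (1 - mu) * r2 <= W mu A B S.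
Proof.
intros hm h1 h2 h3. unfold W, ch1, ch2.
destruct (Rle_dec (1/2) mu); simpl; unfold Rmin.
- assert (e1 : 0 <= mu * (A - r1)) by (apply Rmult_le_pos; lra).
  assert (e2 : 0 <= (1 - mu) * (B - r2)) by (apply Rmult_le_pos; lra).
  assert (e3 : 0 <= (1 - mu) * (S - r1 - r2)) by (apply Rmult_le_pos; lra).
  assert (e4 : 0 <= (2 * mu - 1) * (A - r1)) by (apply Rmult_le_pos; lra).
  destruct (Rle_dec B (S - A)); nra.
- assert (e1 : 0 <= mu * (A - r1)) by (apply Rmult_le_pos; lra).
  assert (e2 : 0 <= (1 - mu) * (B - r2)) by (apply Rmult_le_pos; lra).
  assert (e3 : 0 <= mu * (S - r1 - r2)) by (apply Rmult_le_pos; lra).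
  assert (e4 : 0 <= (1 - 2 * mu) * (B - r2)) by (apply Rmult_le_pos; lra).
  destruct (Rle_dec A (S - B)); nra.
Qed.

Lemma ch_feas mu A B S : 0 <= A <= S -> 0 <= B <= S ->
  0 <= ch1 mu A B S /\ 0 <= ch2 mu A B S /\ ch1 mu A B S <= A /\ ch2 mu A B S <= B /\
  ch1 mu A B S + ch2 mu A B S <= S.
Proof.
intros h1 h2. unfold ch1, ch2.
destruct (Rle_dec (1/2) mu); simpl; unfold Rmin.
- destruct (Rle_dec B (S - A)); lra.
- destruct (Rle_dec A (S - B)); lra.
Qed.

Definition Fphys (g : gains) (P mu a1 a2 r1 r2 b3 : R) : R :=
  W mu (Rmin (capm (gr1 g ^ 2 * (P - a1)))
             (capm (g21 g ^ 2 * P + 2 * g21 g * g2r g * sqrt (r1 * a1)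
                    + g2r g ^ 2 * r1 + g2r g ^ 2 * b3)))
       (Rmin (capm (gr2 g ^ 2 * (P - a2)))
             (capm (g12 g ^ 2 * P + 2 * g12 g * g1r g * sqrt (r2 * a2)
                    + g1r g ^ 2 * r2 + g1r g ^ 2 * b3)))
       (capm (gr1 g ^ 2 * (P - a1) + gr2 g ^ 2 * (P - a2))).

Definition Fp (g : gains) (P mu : R) (p : T4) : R :=
  Fphys g P mu (P * p.1.1.1) (P * p.1.1.2) (P * p.1.2 * p.2) (P * p.1.2 * (1 - p.2))
    (P * (1 - p.1.2)).


Ltac contauto :=
  lazymatch goal with
  | |- cont (fun p => p.1.1.1) => exact cont_p1
  | |- cont (fun p => p.1.1.2) => exact cont_p2
  | |- cont (fun p => p.1.2) => exact cont_p3
  | |- cont (fun p => p.2) => exact cont_p4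
  | |- cont snd => exact cont_p4
  | |- cont (fun p => Rplus (@?f p) (@?h p)) => apply cont_plus; contauto
  | |- cont (fun p => Rmult (@?f p) (@?h p)) => apply cont_mult; contauto
  | |- cont (fun p => Ropp (@?f p)) => apply cont_opp; contauto
  | |- cont (fun p => Rmin (@?f p) (@?h p)) => apply cont_min; contauto
  | |- cont (fun p => capm (@?f p)) => apply (cont_comp capm); [exact cont1_capmax| contauto]
  | |- cont (fun p => sqrt (@?f p)) => apply (cont_comp sqrt); [exact cont1_sqrt| contauto]
  | |- cont (fun p => _) => apply cont_c
  | |- ?G => idtac "FAIL" G; fail
  end.

Lemma Fp_cont g P mu : cont (Fp g P mu).
Proof.
unfold Fp, Fphys, W, ch1, ch2. destruct (Rle_dec (1/2) mu); simpl; unfold Rminus; contauto.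
Qed.

Definition kof (a r : R) : R := match Rlt_dec 0 a with left _ => r / a | right _ => 0 end.

Lemma kfacts a r : 0 <= a -> 0 <= r ->
  0 <= kof a r /\ kof a r * a <= r /\ 0 <= kof a r * a /\ sqrt (kof a r) * a = sqrt (r * a).
Proof.
intros ha hr. unfold kof. destruct (Rlt_dec 0 a) as [h|h].
- assert (e : r / a * a = r) by (field; lra).
  assert (0 <= r / a) by (unfold Rdiv; apply Rmult_le_pos; [lra| left; apply Rinv_0_lt_compat; lra]).
  repeat split; try lra.
  replace (r * a) with (r / a * (a * a)) by (field; lra).
  rewrite sqrt_mult; [rewrite sqrt_square; [reflexivity|lra] | nra | nra].
- assert (a = 0) by lra. subst a. rewrite !Rmult_0_r sqrt_0. repeat split; lra.
Qed.

Definition x0phys (P a1 a2 r1 r2 : R) : wsr_var :=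
  mkVar 0 0 a1 a2 (P - a1) (P - a2) (P - kof a1 r1 * a1 - kof a2 r2 * a2) (kof a1 r1) (kof a2 r2).

Definition xphys (g : gains) (P mu a1 a2 r1 r2 : R) : wsr_var :=
  mkVar (ch1 mu (Rmin (J1 g (x0phys P a1 a2 r1 r2)) (J2 g P (x0phys P a1 a2 r1 r2)))
                (Rmin (J3 g (x0phys P a1 a2 r1 r2)) (J4 g P (x0phys P a1 a2 r1 r2)))
                (J5 g (x0phys P a1 a2 r1 r2)))
        (ch2 mu (Rmin (J1 g (x0phys P a1 a2 r1 r2)) (J2 g P (x0phys P a1 a2 r1 r2)))
                (Rmin (J3 g (x0phys P a1 a2 r1 r2)) (J4 g P (x0phys P a1 a2 r1 r2)))
                (J5 g (x0phys P a1 a2 r1 r2)))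
        a1 a2 (P - a1) (P - a2) (P - kof a1 r1 * a1 - kof a2 r2 * a2) (kof a1 r1) (kof a2 r2).

Lemma capm_nonneg x : 0 <= capm x.
Proof. unfold capm. fold (Cap (Rmax 0 x)). apply Cap_nonneg. apply Rmax_l. Qed.

Lemma main_x g P mu a1 a2 r1 r2 :
  0 <= g21 g /\ 0 <= g2r g /\ 0 <= g12 g /\ 0 <= g1r g /\ 0 <= gr1 g /\ 0 <= gr2 g ->
  0 < P -> 0 <= mu <= 1 ->
  0 <= a1 <= P -> 0 <= a2 <= P -> 0 <= r1 -> 0 <= r2 -> r1 + r2 <= P ->
  wsr_feasible g P (xphys g P mu a1 a2 r1 r2) /\
  Fphys g P mu a1 a2 r1 r2 (P - r1 - r2) <= wsr_obj mu (xphys g P mu a1 a2 r1 r2).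
Proof.
intros [h21 [h2r [h12 [h1r [hr1 hr2]]]]] hP hmu ha1 ha2 hq1 hq2 hq.
destruct (kfacts a1 r1) as [hk1 [hk1a [hk1b hs1]]]; try lra.
destruct (kfacts a2 r2) as [hk2 [hk2a [hk2b hs2]]]; try lra.
set (K1 := kof a1 r1) in *. set (K2 := kof a2 r2) in *.
set (x0 := x0phys P a1 a2 r1 r2).
set (X := xphys g P mu a1 a2 r1 r2).
set (b3 := P - K1 * a1 - K2 * a2).
assert (hb3 : P - r1 - r2 <= b3) by (unfold b3; lra).
assert (G1 : 0 <= gr1 g ^ 2) by apply pow2_ge_0.
assert (G2 : 0 <= gr2 g ^ 2) by apply pow2_ge_0.
assert (G3 : 0 <= g21 g ^ 2) by apply pow2_ge_0.
assert (G4 : 0 <= g2r g ^ 2) by apply pow2_ge_0.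
assert (G5 : 0 <= g12 g ^ 2) by apply pow2_ge_0.
assert (G6 : 0 <= g1r g ^ 2) by apply pow2_ge_0.
assert (G7 : 0 <= 2 * g21 g * g2r g) by (apply Rmult_le_pos; [lra|]; assumption).
assert (G8 : 0 <= 2 * g12 g * g1r g) by (apply Rmult_le_pos; [lra|]; assumption).
assert (Q1 : 0 <= sqrt K1 * a1) by (rewrite hs1; apply sqrt_pos).
assert (Q2 : 0 <= sqrt K2 * a2) by (rewrite hs2; apply sqrt_pos).
set (arg1 := gr1 g ^ 2 * (P - a1)).
set (arg3 := gr2 g ^ 2 * (P - a2)).
set (arg2 := g21 g ^ 2 * P + 2 * g21 g * g2r g * (sqrt K1 * a1) + g2r g ^ 2 * (K1 * a1) + g2r g ^ 2 * b3).
set (arg4 := g12 g ^ 2 * P + 2 * g12 g * g1r g * (sqrt K2 * a2) + g1r g ^ 2 * (K2 * a2) + g1r g ^ 2 * b3).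
assert (EJ1 : J1 g x0 = Cap arg1) by reflexivity.
assert (EJ3 : J3 g x0 = Cap arg3) by reflexivity.
assert (EJ5 : J5 g x0 = Cap (arg1 + arg3)) by reflexivity.
assert (EJ2 : J2 g P x0 = Cap arg2).
{ unfold J2, arg2, x0, x0phys; cbn [k1 al1 be3]. f_equal. fold K1 K2 b3. ring. }
assert (EJ4 : J4 g P x0 = Cap arg4).
{ unfold J4, arg4, x0, x0phys; cbn [k2 al2 be3]. f_equal. fold K1 K2 b3. ring. }
assert (N1 : 0 <= arg1) by (unfold arg1; apply Rmult_le_pos; lra).
assert (N3 : 0 <= arg3) by (unfold arg3; apply Rmult_le_pos; lra).
assert (N2 : 0 <= arg2).
{ unfold arg2. assert (0 <= g21 g ^ 2 * P) by (apply Rmult_le_pos; lra).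
  assert (0 <= 2 * g21 g * g2r g * (sqrt K1 * a1)) by (apply Rmult_le_pos; lra).
  assert (0 <= g2r g ^ 2 * (K1 * a1)) by (apply Rmult_le_pos; lra).
  assert (0 <= g2r g ^ 2 * b3) by (apply Rmult_le_pos; lra). lra. }
assert (N4 : 0 <= arg4).
{ unfold arg4. assert (0 <= g12 g ^ 2 * P) by (apply Rmult_le_pos; lra).
  assert (0 <= 2 * g12 g * g1r g * (sqrt K2 * a2)) by (apply Rmult_le_pos; lra).
  assert (0 <= g1r g ^ 2 * (K2 * a2)) by (apply Rmult_le_pos; lra).
  assert (0 <= g1r g ^ 2 * b3) by (apply Rmult_le_pos; lra). lra. }
set (A := Rmin (J1 g x0) (J2 g P x0)).
set (B := Rmin (J3 g x0) (J4 g P x0)).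
set (S := J5 g x0).
assert (hA : 0 <= A <= S).
{ unfold A, S. rewrite EJ1 EJ2 EJ5. split.
  - apply Rmin_nonneg; apply Cap_nonneg; lra.
  - eapply Rle_trans; [apply Rmin_l|]. apply Cap_mono; lra. }
assert (hB : 0 <= B <= S).
{ unfold B, S. rewrite EJ3 EJ4 EJ5. split.
  - apply Rmin_nonneg; apply Cap_nonneg; lra.
  - eapply Rle_trans; [apply Rmin_l|]. apply Cap_mono; lra. }
destruct (ch_feas mu A B S hA hB) as [c1 [c2 [c3 [c4 c5]]]].
assert (XJ1 : J1 g X = J1 g x0) by reflexivity.
assert (XJ2 : J2 g P X = J2 g P x0) by reflexivity.
assert (XJ3 : J3 g X = J3 g x0) by reflexivity.
assert (XJ4 : J4 g P X = J4 g P x0) by reflexivity.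
assert (XJ5 : J5 g X = J5 g x0) by reflexivity.
assert (XR1 : Defs.R1 X = ch1 mu A B S) by reflexivity.
assert (XR2 : Defs.R2 X = ch2 mu A B S) by reflexivity.
split.
- unfold wsr_feasible. rewrite XJ1 XJ2 XJ3 XJ4 XJ5 XR1 XR2. fold A B S.
  unfold X, xphys; cbn [al1 al2 be1 be2 be3 k1 k2]. fold K1 K2.
  repeat split; try lra; fold b3; try lra.
- unfold wsr_obj. rewrite XR1 XR2.
  set (AF := Rmin (capm arg1) (capm (g21 g ^ 2 * P + 2 * g21 g * g2r g * (sqrt K1 * a1)
                    + g2r g ^ 2 * r1 + g2r g ^ 2 * (P - r1 - r2)))).
  set (BF := Rmin (capm arg3) (capm (g12 g ^ 2 * P + 2 * g12 g * g1r g * (sqrt K2 * a2)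
                    + g1r g ^ 2 * r2 + g1r g ^ 2 * (P - r1 - r2)))).
  set (SF := capm (arg1 + arg3)).
  assert (EF : Fphys g P mu a1 a2 r1 r2 (P - r1 - r2) = W mu AF BF SF)
    by (unfold Fphys, AF, BF, SF, arg1, arg3; rewrite hs1 hs2; reflexivity).
  rewrite EF.
  assert (hAF : AF <= A).
  { unfold AF, A. rewrite EJ1 EJ2. apply Rmin_mono.
    - rewrite capm_eq; lra.
    - rewrite capm_eq.
      + apply Cap_mono.
        * assert (0 <= g21 g ^ 2 * P) by (apply Rmult_le_pos; lra).
          assert (0 <= 2 * g21 g * g2r g * (sqrt K1 * a1)) by (apply Rmult_le_pos; lra).
          assert (0 <= g2r g ^ 2 * r1) by (apply Rmult_le_pos; lra).
          assert (0 <= g2r g ^ 2 * (P - r1 - r2)) by (apply Rmult_le_pos; lra). nra.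
        * unfold arg2. assert (0 <= g2r g ^ 2 * (r2 - K2 * a2)) by (apply Rmult_le_pos; lra).
          unfold b3. nra.
      + assert (0 <= g21 g ^ 2 * P) by (apply Rmult_le_pos; lra).
        assert (0 <= 2 * g21 g * g2r g * (sqrt K1 * a1)) by (apply Rmult_le_pos; lra).
        assert (0 <= g2r g ^ 2 * r1) by (apply Rmult_le_pos; lra).
        assert (0 <= g2r g ^ 2 * (P - r1 - r2)) by (apply Rmult_le_pos; lra). nra. }
  assert (hBF : BF <= B).
  { unfold BF, B. rewrite EJ3 EJ4. apply Rmin_mono.
    - rewrite capm_eq; lra.
    - rewrite capm_eq.
      + apply Cap_mono.
        * assert (0 <= g12 g ^ 2 * P) by (apply Rmult_le_pos; lra).
          assert (0 <= 2 * g12 g * g1r g * (sqrt K2 * a2)) by (apply Rmult_le_pos; lra).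
          assert (0 <= g1r g ^ 2 * r2) by (apply Rmult_le_pos; lra).
          assert (0 <= g1r g ^ 2 * (P - r1 - r2)) by (apply Rmult_le_pos; lra). nra.
        * unfold arg4. assert (0 <= g1r g ^ 2 * (r1 - K1 * a1)) by (apply Rmult_le_pos; lra).
          unfold b3. nra.
      + assert (0 <= g12 g ^ 2 * P) by (apply Rmult_le_pos; lra).
        assert (0 <= 2 * g12 g * g1r g * (sqrt K2 * a2)) by (apply Rmult_le_pos; lra).
        assert (0 <= g1r g ^ 2 * r2) by (apply Rmult_le_pos; lra).
        assert (0 <= g1r g ^ 2 * (P - r1 - r2)) by (apply Rmult_le_pos; lra). nra. }
  assert (hSF : SF = S) by (unfold SF, S; rewrite EJ5; apply capm_eq; lra).
  assert (hAF0 : 0 <= AF <= SF).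
  { split. unfold AF; apply Rmin_nonneg; apply capm_nonneg. lra. }
  assert (hBF0 : 0 <= BF <= SF).
  { split. unfold BF; apply Rmin_nonneg; apply capm_nonneg. lra. }
  destruct (ch_feas mu AF BF SF hAF0 hBF0) as [d1 [d2 [d3 [d4 d5]]]].
  unfold W at 1. apply W_opt; lra.
Qed.

Lemma main_y g P mu y :
  0 <= g21 g /\ 0 <= g2r g /\ 0 <= g12 g /\ 0 <= g1r g /\ 0 <= gr1 g /\ 0 <= gr2 g ->
  0 < P -> 0 <= mu <= 1 -> wsr_feasible g P y ->
  wsr_obj mu y <= Fphys g P mu (al1 y) (al2 y) (k1 y * al1 y) (k2 y * al2 y)
                    (P - k1 y * al1 y - k2 y * al2 y).
Proof.
intros [h21 [h2r [h12 [h1r [hr1 hr2]]]]] hP hmu hy.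
destruct hy as [y1 [y2 [y3 [y4 [y5 [y6 [y7 [y8 [y9 [y10 [y11 [y12 [y13 [y14 y15]]]]]]]]]]]]]].
assert (G1 : 0 <= gr1 g ^ 2) by apply pow2_ge_0.
assert (G2 : 0 <= gr2 g ^ 2) by apply pow2_ge_0.
assert (G3 : 0 <= g21 g ^ 2) by apply pow2_ge_0.
assert (G4 : 0 <= g2r g ^ 2) by apply pow2_ge_0.
assert (G5 : 0 <= g12 g ^ 2) by apply pow2_ge_0.
assert (G6 : 0 <= g1r g ^ 2) by apply pow2_ge_0.
assert (G7 : 0 <= 2 * g21 g * g2r g) by (apply Rmult_le_pos; [lra|]; assumption).
assert (G8 : 0 <= 2 * g12 g * g1r g) by (apply Rmult_le_pos; [lra|]; assumption).
assert (S1 : sqrt (k1 y * al1 y * al1 y) = sqrt (k1 y) * al1 y).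
{ rewrite Rmult_assoc sqrt_mult; [rewrite sqrt_square; [reflexivity|lra] | lra | nra]. }
assert (S2 : sqrt (k2 y * al2 y * al2 y) = sqrt (k2 y) * al2 y).
{ rewrite Rmult_assoc sqrt_mult; [rewrite sqrt_square; [reflexivity|lra] | lra | nra]. }
assert (Q1 : 0 <= sqrt (k1 y) * al1 y) by (apply Rmult_le_pos; [apply sqrt_pos|lra]).
assert (Q2 : 0 <= sqrt (k2 y) * al2 y) by (apply Rmult_le_pos; [apply sqrt_pos|lra]).
assert (K1 : 0 <= k1 y * al1 y) by nra.
assert (K2 : 0 <= k2 y * al2 y) by nra.
unfold Fphys. rewrite S1 S2. unfold wsr_obj. apply W_opt; try lra.
- eapply Rle_trans; [exact y10|]. apply Rmin_mono.
  + unfold J1. rewrite capm_eq; [|apply Rmult_le_pos; lra]. apply Cap_mono.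
    * apply Rmult_le_pos; lra.
    * apply Rmult_le_compat_l; lra.
  + unfold J2. rewrite capm_eq.
    * apply Cap_mono.
      -- assert (0 <= g21 g ^ 2 * P) by (apply Rmult_le_pos; lra).
         assert (0 <= 2 * g21 g * g2r g * (sqrt (k1 y) * al1 y)) by (apply Rmult_le_pos; lra).
         assert (0 <= g2r g ^ 2 * (k1 y * al1 y)) by (apply Rmult_le_pos; lra).
         assert (0 <= g2r g ^ 2 * be3 y) by (apply Rmult_le_pos; lra). nra.
      -- assert (0 <= g2r g ^ 2 * (P - k1 y * al1 y - k2 y * al2 y - be3 y)) by (apply Rmult_le_pos; lra).
         nra.
    * assert (0 <= g21 g ^ 2 * P) by (apply Rmult_le_pos; lra).
      assert (0 <= 2 * g21 g * g2r g * (sqrt (k1 y) * al1 y)) by (apply Rmult_le_pos; lra).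
      assert (0 <= g2r g ^ 2 * (k1 y * al1 y)) by (apply Rmult_le_pos; lra).
      assert (0 <= g2r g ^ 2 * (P - k1 y * al1 y - k2 y * al2 y)) by (apply Rmult_le_pos; lra). nra.
- eapply Rle_trans; [exact y11|]. apply Rmin_mono.
  + unfold J3. rewrite capm_eq; [|apply Rmult_le_pos; lra]. apply Cap_mono.
    * apply Rmult_le_pos; lra.
    * apply Rmult_le_compat_l; lra.
  + unfold J4. rewrite capm_eq.
    * apply Cap_mono.
      -- assert (0 <= g12 g ^ 2 * P) by (apply Rmult_le_pos; lra).
         assert (0 <= 2 * g12 g * g1r g * (sqrt (k2 y) * al2 y)) by (apply Rmult_le_pos; lra).
         assert (0 <= g1r g ^ 2 * (k2 y * al2 y)) by (apply Rmult_le_pos; lra).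
         assert (0 <= g1r g ^ 2 * be3 y) by (apply Rmult_le_pos; lra). nra.
      -- assert (0 <= g1r g ^ 2 * (P - k1 y * al1 y - k2 y * al2 y - be3 y)) by (apply Rmult_le_pos; lra).
         nra.
    * assert (0 <= g12 g ^ 2 * P) by (apply Rmult_le_pos; lra).
      assert (0 <= 2 * g12 g * g1r g * (sqrt (k2 y) * al2 y)) by (apply Rmult_le_pos; lra).
      assert (0 <= g1r g ^ 2 * (k2 y * al2 y)) by (apply Rmult_le_pos; lra).
      assert (0 <= g1r g ^ 2 * (P - k1 y * al1 y - k2 y * al2 y)) by (apply Rmult_le_pos; lra). nra.
- eapply Rle_trans; [exact y12|]. unfold J5. rewrite capm_eq.
  + apply Cap_mono.
    * assert (0 <= gr1 g ^ 2 * be1 y) by (apply Rmult_le_pos; lra).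
      assert (0 <= gr2 g ^ 2 * be2 y) by (apply Rmult_le_pos; lra). lra.
    * assert (gr1 g ^ 2 * be1 y <= gr1 g ^ 2 * (P - al1 y)) by (apply Rmult_le_compat_l; lra).
      assert (gr2 g ^ 2 * be2 y <= gr2 g ^ 2 * (P - al2 y)) by (apply Rmult_le_compat_l; lra). lra.
  + assert (0 <= gr1 g ^ 2 * (P - al1 y)) by (apply Rmult_le_pos; lra).
    assert (0 <= gr2 g ^ 2 * (P - al2 y)) by (apply Rmult_le_pos; lra). lra.
Qed.

Definition uof (r1 r2 : R) : R := match Rlt_dec 0 (r1 + r2) with left _ => r1 / (r1 + r2) | right _ => 0 end.

Lemma uof_facts r1 r2 P : 0 <= r1 -> 0 <= r2 -> 0 < P ->
  0 <= uof r1 r2 <= 1 /\ P * ((r1 + r2) / P) * uof r1 r2 = r1 /\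
  P * ((r1 + r2) / P) * (1 - uof r1 r2) = r2.
Proof.
intros h1 h2 hP. unfold uof. destruct (Rlt_dec 0 (r1 + r2)) as [h|h].
- assert (e : r1 / (r1 + r2) * (r1 + r2) = r1) by (field; lra).
  assert (0 <= r1 / (r1 + r2)).
  { unfold Rdiv; apply Rmult_le_pos; [lra| left; apply Rinv_0_lt_compat; lra]. }
  repeat split; try lra.
  + assert (r1 / (r1 + r2) * (r1 + r2) <= 1 * (r1 + r2)) by lra.
    apply (Rmult_le_reg_r (r1 + r2)); lra.
  + field; lra.
  + field; lra.
- assert (r1 = 0) by lra. assert (r2 = 0) by lra. subst. repeat split; try lra; field; lra.
Qed.

Theorem lemma1 (g : gains) (P mu : R)
  (hg : 0 <= g21 g /\ 0 <= g2r g /\ 0 <= g12 g /\ 0 <= g1r g /\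
        0 <= gr1 g /\ 0 <= gr2 g)
  (hP : 0 < P) (hmu : 0 <= mu <= 1) :
  exists x : wsr_var,
    wsr_optimal g P mu x /\
    al1 x + be1 x = P /\ al2 x + be2 x = P /\
    (0 < al1 x \/ 0 < al2 x -> k1 x * al1 x + k2 x * al2 x + be3 x = P).
Proof.
destruct (evt (Fp g P mu) (Fp_cont g P mu)) as [c [hc hmax]].
destruct hc as [[c1 c1'] [[c2 c2'] [[c3 c3'] [c4 c4']]]].
set (a1 := P * c.1.1.1). set (a2 := P * c.1.1.2).
set (r1 := P * c.1.2 * c.2). set (r2 := P * c.1.2 * (1 - c.2)).
assert (ha1 : 0 <= a1 <= P) by (unfold a1; split; nra).
assert (ha2 : 0 <= a2 <= P) by (unfold a2; split; nra).
assert (hr1 : 0 <= r1) by (unfold r1; apply Rmult_le_pos; nra).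
assert (hr2 : 0 <= r2) by (unfold r2; apply Rmult_le_pos; nra).
assert (hr : r1 + r2 <= P) by (unfold r1, r2; nra).
destruct (main_x g P mu a1 a2 r1 r2 hg hP hmu ha1 ha2 hr1 hr2 hr) as [hf hF].
assert (Fc : Fp g P mu c = Fphys g P mu a1 a2 r1 r2 (P - r1 - r2)).
{ unfold Fp. fold a1 a2 r1 r2. f_equal. unfold r1, r2. ring. }
exists (xphys g P mu a1 a2 r1 r2). split; [split|].
- exact hf.
- intros y hy.
  eapply Rle_trans; [apply (main_y g P mu y hg hP hmu hy)|].
  eapply Rle_trans; [|apply hF]. rewrite <- Fc.
  destruct hy as [y1 [y2 [y3 [y4 [y5 [y6 [y7 [y8 [y9 [y10 [y11 [y12 [y13 [y14 y15]]]]]]]]]]]]]].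
  assert (K1 : 0 <= k1 y * al1 y) by nra.
  assert (K2 : 0 <= k2 y * al2 y) by nra.
  destruct (uof_facts (k1 y * al1 y) (k2 y * al2 y) P K1 K2 hP) as [hu [hu1 hu2]].
  set (py := (al1 y / P, al2 y / P, (k1 y * al1 y + k2 y * al2 y) / P,
              uof (k1 y * al1 y) (k2 y * al2 y)) : T4).
  assert (Ey : Fp g P mu py = Fphys g P mu (al1 y) (al2 y) (k1 y * al1 y) (k2 y * al2 y)
                    (P - k1 y * al1 y - k2 y * al2 y)).
  { unfold Fp, py; cbn [fst snd]. rewrite hu1 hu2. f_equal; field; lra. }
  rewrite <- Ey. apply hmax. unfold inbox, py; cbn [fst snd].
  assert (0 <= al1 y / P <= 1).
  { split. unfold Rdiv; apply Rmult_le_pos; [lra| left; apply Rinv_0_lt_compat; lra].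
    apply (Rmult_le_reg_r P); [lra|]. unfold Rdiv. rewrite Rmult_assoc Rinv_l; lra. }
  assert (0 <= al2 y / P <= 1).
  { split. unfold Rdiv; apply Rmult_le_pos; [lra| left; apply Rinv_0_lt_compat; lra].
    apply (Rmult_le_reg_r P); [lra|]. unfold Rdiv. rewrite Rmult_assoc Rinv_l; lra. }
  assert (0 <= (k1 y * al1 y + k2 y * al2 y) / P <= 1).
  { split. unfold Rdiv; apply Rmult_le_pos; [lra| left; apply Rinv_0_lt_compat; lra].
    apply (Rmult_le_reg_r P); [lra|]. unfold Rdiv. rewrite Rmult_assoc Rinv_l; lra. }
  tauto.
- unfold xphys; cbn [al1 al2 be1 be2 be3 k1 k2]. split; [ring|]. split; [ring|].
  intros _. ring.
Qed.
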